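(* Let $n\ge 1$, $S=\{1,\dots,n\}$, $\Pi=\{P_0,\dots,P_n\}$ and $\mathcal{R}=\{R_{(i,j)}:(i,j)\in S\times S\}$. Let $\mathcal{PN}(n)$ be the class of all (finite or infinite) pointed $(\Pi,\mathcal{R})$-models that are $\mathrm{PN}(n)$-structures. Then $\mathcal{PN}(n)$ is definable by a single first-order $(\Pi,\mathcal{R})$-sentence, and consequently every $(\Pi,\mathcal{R})$-automaton that converges (in particular, every one that halts) in $\mathcal{PN}(n)$ specifies a local algorithm in $\mathcal{PN}(n)$.
   Context: A $(\Pi,\mathcal{R})$-model $M$ consists of a nonempty domain $W$ with $P^M\subseteq W$ for $P\in\Pi$ and $R^M\subseteq W\times W$ for $R\in\mathcal{R}$; a pointed model is $(M,w)$ with $w\in W$. A pointed model $(M,w)$ is a $\mathrm{PN}(n)$-structure if: (1) the union $R$ of all $R_{(i,j)}^M$ is symmetric and irreflexive; (2) for distinct pairs $(i,j)\ne(k,l)$, $R_{(i,j)}^M(u,v)$ implies not $R_{(k,l)}^M(u,v)$; (3) $R_{(i,j)}^M(u,v)$ implies $R_{(j,i)}^M(v,u)$; (4) each $R_{(i,j)}^M$ has out-degree and in-degree at most one at every node; (5) if $R_{(i,j)}^M(u,v)$ and $k<i$, then $R_{(k,l)}^M(u,v')$ for some $l\in S$ and some node $v'$; (6) if $R_{(i,j)}^M(u,v)$ and $k<j$, then $R_{(l,k)}^M(u',v)$ for some $l\in S$ and some node $u'$; (7) for every node $u$ and $i\in\{0,\dots,n\}$, $u\in P_i^M$ iff the out-degree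 of $R$ at $u$ is $i$. A class $\mathcal{H}$ of pointed models is definable by a first-order sentence $\varphi$ if for all pointed models $(M,w)$: $(M,w)\in\mathcal{H}$ iff $M\models\varphi$. A $(\Pi,\mathcal{R})$-automaton, with $\mathcal{R}$ enumerated as $R_1,\dots,R_k$, is a tuple $A=(Q,\mathcal{M},\pi,\delta,\mu,F,G)$ with $Q,\mathcal{M}$ nonempty finite or countably infinite, $\pi:\mathrm{Pow}(\Pi)\to Q$, $\delta:(\mathrm{Pow}(\mathcal{M}))^k\times Q\to Q$, $\mu:Q\times\mathcal{R}\to\mathcal{M}$, $F\subseteq Q$, $G\subseteq Q\setminus F$. On $M$: $f_0(w)=\pi(\{P\in\Pi:w\in P^M\})$, $f_{m+1}(w)=\delta((N_1,\dots,N_k),f_m(w))$ with $N_i=\{\mu(f_m(v),R_i):(w,v)\in R_i^M\}$. $A$ accepts $(M,w)$ in round $m$ if $f_m(w)\in F$ and $f_{m'}(w)\notin G$ for $m'<m$; rejects in round $m$ if $f_m(w)\in G$ and $f_{m'}(w)\notin F$ for $m'<m$. $A$ converges in $\mathcal{K}$ if every $(M,w)\in\mathcal{K}$ is accepted or rejected in some round; $A$ halts in $\mathcal{K}$ if it converges and, once $f_m(w)\in F\cup G$ first occurs, the state stays $f_m(w)$ forever. $A$ specifies a local algorithm in $\mathcal{K}$ if there is $N\in\mathbb{N}$ such that every $(M,w)\in\mathcal{K}$ is accepted or rejected in some round $\le N$. *)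

(* Defs.v *)
From mathcomp Require Import all_boot.
From Stdlib Require Import List.
Set Implicit Arguments. Unset Strict Implicit. Unset Printing Implicit Defensive.

(* Signature for parameter n:
   Pi = {P_0,...,P_n}  indexed by 'I_n.+1 (P_i is index i);
   R  = {R_(i,j) : (i,j) in S x S}, S = {1..n}, indexed by 'I_n * 'I_n,
   where ordinal k : 'I_n stands for the element k+1 of S (order preserving). *)
Definition PIdx (n : nat) := 'I_n.+1.
Definition RIdx (n : nat) := ('I_n * 'I_n)%type.

(* A (Pi,R)-model with domain W (nonemptiness is witnessed by the point). *)
Record model (n : nat) (W : Type) := Model {
  Pm : PIdx n -> W -> Prop;
  Rm : RIdx n -> W -> W -> Prop }.

Definition pclass (n : nat) := forall (W : Type), model n W -> W -> Prop.

Inductive formula (n : nat) : Type :=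
| FP   : PIdx n -> nat -> formula n
| FR   : RIdx n -> nat -> nat -> formula n
| FEq  : nat -> nat -> formula n
| FBot : formula n
| FNot : formula n -> formula n
| FAnd : formula n -> formula n -> formula n
| FOr  : formula n -> formula n -> formula n
| FImp : formula n -> formula n -> formula n
| FAll : nat -> formula n -> formula n
| FEx  : nat -> formula n -> formula n.

Fixpoint free (n : nat) (x : nat) (phi : formula n) : Prop :=
  match phi with
  | FP _ y => x = y
  | FR _ y z => x = y \/ x = z
  | FEq y z => x = y \/ x = z
  | FBot => False
  | FNot a => free x a
  | FAnd a b | FOr a b | FImp a b => free x a \/ free x b
  | FAll y a | FEx y a => x <> y /\ free x a
  end.

Definition sentence (n : nat) (phi : formula n) : Prop := forall x, ~ free x phi.

Definition upd (W : Type) (rho : nat -> W) (x : nat) (a : W) : nat -> W :=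
  fun y => if Nat.eqb y x then a else rho y.

Fixpoint sat (n : nat) (W : Type) (M : model n W) (rho : nat -> W) (phi : formula n)
  : Prop :=
  match phi with
  | FP i x => Pm M i (rho x)
  | FR p x y => Rm M p (rho x) (rho y)
  | FEq x y => rho x = rho y
  | FBot => False
  | FNot a => ~ sat M rho a
  | FAnd a b => sat M rho a /\ sat M rho b
  | FOr a b => sat M rho a \/ sat M rho b
  | FImp a b => sat M rho a -> sat M rho b
  | FAll x a => forall d : W, sat M (upd rho x d) a
  | FEx x a => exists d : W, sat M (upd rho x d) a
  end.

Definition models (n : nat) (W : Type) (M : model n W) (phi : formula n) : Prop :=
  forall rho : nat -> W, sat M rho phi.

Definition FO_definable (n : nat) (H : pclass n) : Prop :=
  exists phi : formula n, sentence phi /\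
    forall (W : Type) (M : model n W) (w : W), H W M w <-> models M phi.

Definition Runion (n : nat) (W : Type) (M : model n W) (u v : W) : Prop :=
  exists p : RIdx n, Rm M p u v.

(* the out-degree of the relation Rel at u equals i (possibly infinite degrees
   never equal a natural number) *)
Definition outdeg_is (W : Type) (Rel : W -> W -> Prop) (u : W) (i : nat) : Prop :=
  exists s : list W, List.length s = i /\ List.NoDup s /\
    forall v, Rel u v <-> List.In v s.

Definition PN_structure (n : nat) : pclass n := fun W M _ =>
  (forall u v, Runion M u v -> Runion M v u) /\
  (forall u, ~ Runion M u u) /\
  (forall (p q : RIdx n) u v, p <> q -> Rm M p u v -> ~ Rm M q u v) /\
  (forall (i j : 'I_n) u v, Rm M (i, j) u v -> Rm M (j, i) v u) /\
  (forall (p : RIdx n) u v v', Rm M p u v -> Rm M p u v' -> v = v') /\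
  (forall (p : RIdx n) u u' v, Rm M p u v -> Rm M p u' v -> u = u') /\
  (forall (i j k : 'I_n) u v, Rm M (i, j) u v -> (k < i)%N ->
      exists (l : 'I_n) v', Rm M (k, l) u v') /\
  (forall (i j k : 'I_n) u v, Rm M (i, j) u v -> (k < j)%N ->
      exists (l : 'I_n) u', Rm M (l, k) u' v) /\
  (forall u (i : PIdx n), Pm M i u <-> outdeg_is (Runion M) u i).

(* Pow(X) is represented by predicates X -> Prop; the k-tuple (N_1,...,N_k)
   is a function on the relation index set. *)
Record automaton (n : nat) (Q Msg : Type) := Automaton {
  a_pi    : (PIdx n -> Prop) -> Q;
  a_delta : (RIdx n -> Msg -> Prop) -> Q -> Q;
  a_mu    : Q -> RIdx n -> Msg;
  a_F     : Q -> Prop;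
  a_G     : Q -> Prop;
  a_GF    : forall q, a_G q -> ~ a_F q }.

Fixpoint run (n : nat) (Q Msg : Type) (A : automaton n Q Msg) (W : Type)
  (M : model n W) (m : nat) (w : W) : Q :=
  match m with
  | 0 => a_pi A (fun i => Pm M i w)
  | m'.+1 => a_delta A
      (fun p a => exists v, Rm M p w v /\ a_mu A (run A M m' v) p = a)
      (run A M m' w)
  end.

Definition accepts_in (n : nat) (Q Msg : Type) (A : automaton n Q Msg) (W : Type)
  (M : model n W) (w : W) (m : nat) : Prop :=
  a_F A (run A M m w) /\ forall m', (m' < m)%N -> ~ a_G A (run A M m' w).

Definition rejects_in (n : nat) (Q Msg : Type) (A : automaton n Q Msg) (W : Type)
  (M : model n W) (w : W) (m : nat) : Prop :=
  a_G A (run A M m w) /\ forall m', (m' < m)%N -> ~ a_F A (run A M m' w).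

Definition converges_in (n : nat) (Q Msg : Type) (A : automaton n Q Msg)
  (K : pclass n) : Prop :=
  forall (W : Type) (M : model n W) (w : W), K W M w ->
    exists m, accepts_in A M w m \/ rejects_in A M w m.

Definition halts_in (n : nat) (Q Msg : Type) (A : automaton n Q Msg)
  (K : pclass n) : Prop :=
  converges_in A K /\
  forall (W : Type) (M : model n W) (w : W), K W M w ->
    forall m, (a_F A (run A M m w) \/ a_G A (run A M m w)) ->
      (forall m', (m' < m)%N -> ~ a_F A (run A M m' w) /\ ~ a_G A (run A M m' w)) ->
      forall m'', (m <= m'')%N -> run A M m'' w = run A M m w.

Definition local_algorithm_in (n : nat) (Q Msg : Type) (A : automaton n Q Msg)
  (K : pclass n) : Prop :=
  exists N : nat, forall (W : Type) (M : model n W) (w : W), K W M w ->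
    exists m, (m <= N)%N /\ (accepts_in A M w m \/ rejects_in A M w m).

(* Main.v *)
Require Import Defs.
From mathcomp Require Import all_boot.
From Stdlib Require Import Classical ClassicalEpsilon FunctionalExtensionality PropExtensionality.
From mathcomp Require Import zify.
Set Implicit Arguments. Unset Strict Implicit. Unset Printing Implicit Defensive.

Definition pb (P : Prop) : bool := if excluded_middle_informative P then true else false.
Lemma pbE (P : Prop) : pb P <-> P.
Proof. rewrite /pb; case: excluded_middle_informative => h; split=> //. Qed.

Lemma in_In (T : eqType) (a : T) (s : seq T) : a \in s -> List.In a s.
Proof. elim: s => //= b s IH; rewrite in_cons => /orP[/eqP->|/IH]; auto. Qed.
Lemma In_in (T : eqType) (a : T) (s : seq T) : List.In a s -> a \in s.
Proof. elim: s => //= b s IH [->|/IH h]; by rewrite in_cons ?eqxx ?h ?orbT. Qed.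

Lemma uniq_NoDup (T : eqType) (s : seq T) : uniq s -> List.NoDup s.
Proof.
elim: s => [|a s IH] /=; first by constructor.
case/andP=> ha hs; constructor; last exact: IH.
by move/In_in; rewrite (negbTE ha).
Qed.

Lemma NoDup_map_inj (A B : Type) (f : A -> B) (s : list A) :
  List.NoDup s -> (forall a b, List.In a s -> List.In b s -> f a = f b -> a = b) ->
  List.NoDup (List.map f s).
Proof.
elim: s => [|a s IH] /=; first by constructor.
move=> h; inversion h; subst => hinj; constructor.
  case/List.in_map_iff=> b [fb hb].
  have ab: b = a by apply: hinj; auto.
  by subst.
by apply: IH => // x y hx hy; apply: hinj; auto.
Qed.

Definition ports n W (M : model n W) (x : W) : {set 'I_n * 'I_n} :=
  [set p | pb (exists z, Rm M p x z)].

Lemma in_ports n W (M : model n W) x p : p \in ports M x <-> exists z, Rm M p x z.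
Proof. by rewrite inE pbE. Qed.

Lemma outdeg_card n W (M : model n W) (x : W) (i : nat) :
  (forall (p q : RIdx n) u v, p <> q -> Rm M p u v -> ~ Rm M q u v) ->
  (forall (p : RIdx n) u v v', Rm M p u v -> Rm M p u v' -> v = v') ->
  outdeg_is (Runion M) x i <-> #|ports M x| = i.
Proof.
move=> H2 H4.
pose sc (p : RIdx n) : W := match excluded_middle_informative (exists z, Rm M p x z) with
  | left h => proj1_sig (constructive_indefinite_description _ h) | right _ => x end.
have scP p : p \in ports M x -> Rm M p x (sc p).
  move/in_ports; rewrite /sc; case: excluded_middle_informative => // h _.
  by case: constructive_indefinite_description.
pose L := List.map sc (enum (ports M x)).
have Lnd : List.NoDup L.
  apply: NoDup_map_inj; first exact/uniq_NoDup/enum_uniq.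
  move=> a b /In_in ha /In_in hb e.
  rewrite !mem_enum in ha hb.
  case: (classic (a = b)) => // nab; exfalso.
  by apply: (H2 a b x (sc a) nab (scP a ha)); rewrite e; apply: scP.
have Lm v : Runion M x v <-> List.In v L.
  split.
    case=> p hp; have hpin : p \in ports M x by apply/in_ports; eauto.
    apply/List.in_map_iff; exists p; split; last by apply/in_In; rewrite mem_enum.
    exact: H4 (scP p hpin) hp.
  case/List.in_map_iff=> p [<- /In_in]; rewrite mem_enum => hp.
  by exists p; apply: scP.
have Llen : List.length L = #|ports M x| by rewrite List.length_map cardE.
split.
  case=> s [<- [snd sm]]; rewrite -Llen.
  apply/PeanoNat.Nat.le_antisymm; apply: List.NoDup_incl_length => //.
    by move=> v hv; apply: (proj1 (sm v)); apply: (proj2 (Lm v)).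
  by move=> v hv; apply: (proj1 (Lm v)); apply: (proj2 (sm v)).
move=> hi; exists L; split; first by rewrite Llen.
by split.
Qed.


Section FO.
Variable n : nat.
Definition ftop : formula n := FImp (FBot n) (FBot n).
Definition bigAndF (T : Type) (l : seq T) (f : T -> formula n) : formula n :=
  foldr (fun a acc => FAnd (f a) acc) ftop l.
Definition bigOrF (T : Type) (l : seq T) (f : T -> formula n) : formula n :=
  foldr (fun a acc => FOr (f a) acc) (FBot n) l.
Definition FIff (a b : formula n) := FAnd (FImp a b) (FImp b a).

Lemma sat_bigAnd W (M : model n W) rho (T : finType) (f : T -> formula n) :
  sat M rho (bigAndF (enum T) f) <-> forall a, sat M rho (f a).
Proof.
have gen : forall l : seq T, sat M rho (bigAndF l f) <-> forall a, a \in l -> sat M rho (f a).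
  elim=> [|b l IH] /=; first by split=> // _ a.
  split.
    case=> h1 /IH h2 a; rewrite in_cons => /orP[/eqP->|] //; exact: h2.
  move=> h; split; first by apply: h; rewrite in_cons eqxx.
  by apply/IH => a ha; apply: h; rewrite in_cons ha orbT.
rewrite gen; split=> h a; [apply: h; by rewrite mem_enum| by move=> _; apply: h].
Qed.

Lemma sat_bigOr W (M : model n W) rho (T : finType) (f : T -> formula n) :
  sat M rho (bigOrF (enum T) f) <-> exists a, sat M rho (f a).
Proof.
have gen : forall l : seq T, sat M rho (bigOrF l f) <-> exists2 a, a \in l & sat M rho (f a).
  elim=> [|b l IH] /=; first by split=> // -[].
  split.
    case; first by move=> h; exists b => //; rewrite in_cons eqxx.
    by case/IH=> a ha h; exists a => //; rewrite in_cons ha orbT.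
  case=> a; rewrite in_cons => /orP[/eqP->|ha] h; [by left|right].
  by apply/IH; exists a.
rewrite gen; split; [by case=> a _ h; exists a | by case=> a h; exists a; rewrite ?mem_enum].
Qed.

Lemma free_bigAnd (T : Type) (l : seq T) f x : free x (bigAndF l f) -> exists a, free x (f a).
Proof. elim: l => [|b l IH] /=; [by case|case; [eauto|exact: IH]]. Qed.
Lemma free_bigOr (T : Type) (l : seq T) f x : free x (bigOrF l f) -> exists a, free x (f a).
Proof. elim: l => [|b l IH] /=; [by []|case; [eauto|exact: IH]]. Qed.

Definition RIt := ('I_n * 'I_n)%type.
Definition RU (x y : nat) : formula n := bigOrF (enum {: RIt}) (fun p => FR p x y).
Definition Port (p : RIt) (x y : nat) : formula n := FEx y (FR p x y).

Definition c1a := FAll 0 (FAll 1 (FImp (RU 0 1) (RU 1 0))).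
Definition c1b := FAll 0 (FNot (RU 0 0)).
Definition c2 := FAll 0 (FAll 1 (bigAndF (enum {: RIt}) (fun p =>
   bigAndF (enum {: RIt}) (fun q => if p == q then ftop else
     FImp (FR p 0 1) (FNot (FR q 0 1)))))).
Definition c3 := FAll 0 (FAll 1 (bigAndF (enum {: RIt}) (fun p =>
   FImp (FR p 0 1) (FR (p.2, p.1) 1 0)))).
Definition c4a := FAll 0 (FAll 1 (FAll 2 (bigAndF (enum {: RIt}) (fun p =>
   FImp (FR p 0 1) (FImp (FR p 0 2) (FEq n 1 2)))))).
Definition c4b := FAll 0 (FAll 1 (FAll 2 (bigAndF (enum {: RIt}) (fun p =>
   FImp (FR p 0 2) (FImp (FR p 1 2) (FEq n 0 1)))))).
Definition c5 := FAll 0 (FAll 1 (bigAndF (enum {: RIt}) (fun p =>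
   bigAndF (enum {: 'I_n}) (fun k => if (k < p.1)%N then
     FImp (FR p 0 1) (FEx 2 (bigOrF (enum {: 'I_n}) (fun l => FR (k, l) 0 2))) else ftop)))).
Definition c6 := FAll 0 (FAll 1 (bigAndF (enum {: RIt}) (fun p =>
   bigAndF (enum {: 'I_n}) (fun k => if (k < p.2)%N then
     FImp (FR p 0 1) (FEx 2 (bigOrF (enum {: 'I_n}) (fun l => FR (l, k) 2 1))) else ftop)))).
Definition c7 := FAll 0 (bigAndF (enum {: 'I_n.+1}) (fun i =>
   FIff (FP i 0) (bigOrF (enum {: {set RIt}}) (fun S => if #|S| == i then
      bigAndF (enum {: RIt}) (fun p => if p \in S then Port p 0 1 else FNot (Port p 0 1))
      else FBot n)))).
Definition phiPN := FAnd c1a (FAnd c1b (FAnd c2 (FAnd c3 (FAnd c4a (FAnd c4b (FAnd c5 (FAnd c6 c7))))))).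

Lemma sat_RU W (M : model n W) rho x y : sat M rho (RU x y) <-> Runion M (rho x) (rho y).
Proof. by rewrite /RU sat_bigOr. Qed.

Lemma phiPN_sentence : sentence phiPN.
Proof.
move=> x /=.
have fb : forall a b : Prop, (a \/ b) -> (a -> False) -> (b -> False) -> False by tauto.
repeat match goal with
 | |- ~ _ => move=> ?
 | H : _ /\ _ |- _ => destruct H
 | H : _ \/ _ |- _ => destruct H
 | H : free _ (bigAndF _ _) |- _ => let a := fresh "a" in let h := fresh "h" in
        destruct (free_bigAnd H) as [a h]; clear H; simpl in h
 | H : free _ (bigOrF _ _) |- _ => let a := fresh "a" in let h := fresh "h" in
        destruct (free_bigOr H) as [a h]; clear H; simpl in h
 | H : free _ (RU _ _) |- _ => let a := fresh "a" in let h := fresh "h" in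
        destruct (free_bigOr H) as [a h]; clear H; simpl in h
 | H : free _ (Port _ _ _) |- _ => simpl in H
 | H : free _ (if ?c then _ else _) |- _ => destruct c; simpl in H
 | H : free _ ftop |- _ => simpl in H
 | H : False |- _ => destruct H
 | H : ?x <> ?y, H' : ?x = ?y |- _ => exact: H H'
 end.
Qed.

Section Sem.
Variables (W : Type) (M : model n W) (rho : nat -> W).
Lemma s1a : sat M rho c1a <-> (forall u v, Runion M u v -> Runion M v u).
Proof. rewrite /c1a /=; split=> h u v; move: (h u v); rewrite /= !sat_RU /upd /=; auto. Qed.
Lemma s1b : sat M rho c1b <-> (forall u, ~ Runion M u u).
Proof. rewrite /c1b /=; split=> h u; move: (h u); rewrite /= !sat_RU /upd /=; auto. Qed.
Lemma s2 : sat M rho c2 <-> (forall (p q : RIdx n) u v, p <> q -> Rm M p u v -> ~ Rm M q u v).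
Proof.
rewrite /c2 /=; split.
  move=> h p q u v pq; move: (h u v); rewrite sat_bigAnd => /(_ p); rewrite sat_bigAnd => /(_ q).
  by case: eqP => //= _; rewrite /upd /=.
move=> h u v; rewrite sat_bigAnd => p; rewrite sat_bigAnd => q.
case: eqP => pq /=; first by [].
by rewrite /upd /=; apply: h.
Qed.
Lemma s3 : sat M rho c3 <-> (forall (i j : 'I_n) u v, Rm M (i, j) u v -> Rm M (j, i) v u).
Proof.
rewrite /c3 /=; split.
  by move=> h i j u v; move: (h u v); rewrite sat_bigAnd => /(_ (i, j)); rewrite /upd /=.
by move=> h u v; rewrite sat_bigAnd => -[i j]; rewrite /upd /=; apply: h.
Qed.
Lemma s4a : sat M rho c4a <-> (forall (p : RIdx n) u v v', Rm M p u v -> Rm M p u v' -> v = v').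
Proof.
rewrite /c4a /=; split.
  by move=> h p u v v'; move: (h u v v'); rewrite sat_bigAnd => /(_ p); rewrite /upd /=.
by move=> h u v v'; rewrite sat_bigAnd => p; rewrite /upd /=; apply: h.
Qed.
Lemma s4b : sat M rho c4b <-> (forall (p : RIdx n) u u' v, Rm M p u v -> Rm M p u' v -> u = u').
Proof.
rewrite /c4b /=; split.
  by move=> h p u u' v; move: (h u u' v); rewrite sat_bigAnd => /(_ p); rewrite /upd /=.
by move=> h u u' v; rewrite sat_bigAnd => p; rewrite /upd /=; apply: h.
Qed.
Lemma s5 : sat M rho c5 <-> (forall (i j k : 'I_n) u v, Rm M (i, j) u v -> (k < i)%N ->
      exists (l : 'I_n) v', Rm M (k, l) u v').
Proof.
rewrite /c5 /=; split.
  move=> h i j k u v hr hk; move: (h u v); rewrite sat_bigAnd => /(_ (i, j)).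
  rewrite sat_bigAnd => /(_ k) /=; rewrite hk /= /upd /= => /(_ hr) [v' ].
  by rewrite sat_bigOr /= => -[l hl]; exists l, v'.
move=> h u v; rewrite sat_bigAnd => -[i j]; rewrite sat_bigAnd => k /=.
case: ifP => hk //=; rewrite /upd /= => hr.
have [l [v' hl]] := h i j k u v hr hk.
by exists v'; rewrite sat_bigOr; exists l.
Qed.
Lemma s6 : sat M rho c6 <-> (forall (i j k : 'I_n) u v, Rm M (i, j) u v -> (k < j)%N ->
      exists (l : 'I_n) u', Rm M (l, k) u' v).
Proof.
rewrite /c6 /=; split.
  move=> h i j k u v hr hk; move: (h u v); rewrite sat_bigAnd => /(_ (i, j)).
  rewrite sat_bigAnd => /(_ k) /=; rewrite hk /= /upd /= => /(_ hr) [v' ].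
  by rewrite sat_bigOr /= => -[l hl]; exists l, v'.
move=> h u v; rewrite sat_bigAnd => -[i j]; rewrite sat_bigAnd => k /=.
case: ifP => hk //=; rewrite /upd /= => hr.
have [l [v' hl]] := h i j k u v hr hk.
by exists v'; rewrite sat_bigOr; exists l.
Qed.
Lemma s7 : sat M rho c7 <-> (forall u (i : PIdx n), Pm M i u <-> #|ports M u| = i).
Proof.
have key : forall u (i : nat), sat M (upd rho 0 u) (bigOrF (enum {: {set RIt}}) (fun S => if #|S| == i then
      bigAndF (enum {: RIt}) (fun p => if p \in S then Port p 0 1 else FNot (Port p 0 1))
      else FBot n)) <-> #|ports M u| = i.
  move=> u i; rewrite sat_bigOr; split.
    case=> S; case: eqP => // hS; rewrite sat_bigAnd => hp.
    suff -> : ports M u = S by [].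
    apply/setP => p; move: (hp p).
    case: (p \in S) => /=; rewrite /upd /= => h; first by apply/in_ports.
    by apply/negbTE/negP => /in_ports.
  move=> hc; exists (ports M u); rewrite hc eqxx sat_bigAnd => p.
  case: ifP => /=; rewrite /upd /= => hp; first exact/in_ports.
  by move=> hh; move/negbT/negP: hp; apply; apply/in_ports.
rewrite /c7 /=; split.
  move=> h u i; move: (h u); rewrite sat_bigAnd => /(_ i) /=.
  by rewrite key /upd /=; case.
move=> h u; rewrite sat_bigAnd => i /=; rewrite key /upd /=.
by split=> /h.
Qed.
Lemma sat_phi : sat M rho phiPN <-> (sat M rho c1a /\ sat M rho c1b /\ sat M rho c2 /\
  sat M rho c3 /\ sat M rho c4a /\ sat M rho c4b /\ sat M rho c5 /\ sat M rho c6 /\ sat M rho c7).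
Proof. reflexivity. Qed.
End Sem.
End FO.

Lemma FO_part n : FO_definable (@PN_structure n).
Proof.
exists (phiPN n); split; first exact: phiPN_sentence.
move=> W M w; split.
  move=> [h1a [h1b [h2 [h3 [h4a [h4b [h5 [h6 h7]]]]]]]] rho.
  rewrite sat_phi s1a s1b s2 s3 s4a s4b s5 s6 s7; do 8! split => //.
  by move=> u i; rewrite h7 outdeg_card.
move=> /(_ (fun _ => w)); rewrite sat_phi s1a s1b s2 s3 s4a s4b s5 s6 s7.
move=> [h1a [h1b [h2 [h3 [h4a [h4b [h5 [h6 h7]]]]]]]].
do 8! split => //.
by move=> u i; rewrite h7 outdeg_card.
Qed.


Section Run.
Variables (n : nat) (Q Msg : Type) (A : automaton n Q Msg).

Fixpoint agree (m : nat) W1 (M1 : model n W1) W2 (M2 : model n W2) (x1 : W1) (x2 : W2)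
  : Prop :=
  (forall p, (exists z, Rm M1 p x1 z) <-> (exists z, Rm M2 p x2 z)) /\
  match m with 0 => True | S m' => forall p y1 y2, Rm M1 p x1 y1 -> Rm M2 p x2 y2 ->
     agree m' M1 M2 y1 y2 end.

Lemma agree_mono m W1 (M1 : model n W1) W2 (M2 : model n W2) x1 x2 :
  agree m.+1 M1 M2 x1 x2 -> agree m M1 M2 x1 x2.
Proof.
elim: m x1 x2 => [|m IH] x1 x2 /= [h1 h2]; split=> //.
by move=> p y1 y2 r1 r2; apply: IH; apply: h2 r1 r2.
Qed.

Lemma P_eq W1 (M1 : model n W1) w1 W2 (M2 : model n W2) w2 x1 x2 :
  PN_structure M1 w1 -> PN_structure M2 w2 ->
  (forall p, (exists z, Rm M1 p x1 z) <-> (exists z, Rm M2 p x2 z)) ->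
  (fun i => Pm M1 i x1) = (fun i => Pm M2 i x2).
Proof.
move=> [_ [_ [h2 [_ [h4 [_ [_ [_ h7]]]]]]]] [_ [_ [g2 [_ [g4 [_ [_ [_ g7]]]]]]]] hp.
apply: functional_extensionality => i; apply: propositional_extensionality.
rewrite h7 g7 !outdeg_card //.
suff -> : ports M1 x1 = ports M2 x2 by [].
by apply/setP => p; apply/idP/idP => /in_ports /hp /in_ports.
Qed.

Lemma run_agree W1 (M1 : model n W1) w1 W2 (M2 : model n W2) w2 :
  PN_structure M1 w1 -> PN_structure M2 w2 ->
  forall m x1 x2, agree m M1 M2 x1 x2 -> run A M1 m x1 = run A M2 m x2.
Proof.
move=> P1 P2; elim=> [|m IH] x1 x2 hag /=.
  by rewrite (P_eq P1 P2 (proj1 hag)).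
rewrite (IH x1 x2 (agree_mono hag)); congr (a_delta A _ _).
apply: functional_extensionality => p; apply: functional_extensionality => a.
apply: propositional_extensionality; case: hag => hp hs; split.
  case=> v [rv <-]; have [v' rv'] := proj1 (hp p) (ex_intro _ v rv).
  by exists v'; split=> //; rewrite (IH v v' (hs p v v' rv rv')).
case=> v' [rv' <-]; have [v rv] := proj2 (hp p) (ex_intro _ v' rv').
by exists v; split=> //; rewrite (IH v v' (hs p v v' rv rv')).
Qed.
End Run.


Section K.
Variables (n : nat) (Q Msg : Type) (A : automaton n Q Msg).
Local Notation RIt := ('I_n * 'I_n)%type.

Inductive WalkR W (M : model n W) (x : W) : seq RIt -> W -> Prop :=
| WNil : WalkR M x [::] x
| WCons u y p z : WalkR M x u y -> Rm M p y z -> WalkR M x (p :: u) z.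

Definition trace W (M : model n W) x (u : seq RIt) : {set RIt} :=
  [set p | pb (exists y, WalkR M x u y /\ exists z, Rm M p y z)].

Fixpoint allwords m : seq (seq RIt) :=
  if m is m'.+1 then [::] :: [seq p :: w | p <- enum {: RIt}, w <- allwords m'] else [::].

Lemma mem_allwords m u : (u \in allwords m) = (size u < m).
Proof.
elim: m u => [|m IH] [|p w] //=; rewrite in_cons //=.
apply/allpairsP/idP.
  by case=> -[q w'] /= [_ hw] [_ ->]; rewrite ltnS -IH.
by rewrite ltnS -IH => hw; exists (p, w); rewrite mem_enum.
Qed.

Definition restr m (tau : seq RIt -> {set RIt}) := map tau (allwords m).

Lemma restrP m t1 t2 : restr m t1 = restr m t2 <-> (forall u, size u < m -> t1 u = t2 u).
Proof.
rewrite /restr; split.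
  by move/eq_in_map => h u hu; apply: h; rewrite mem_allwords.
by move=> h; apply/eq_in_map => u; rewrite mem_allwords; apply: h.
Qed.

Lemma restr_down m t1 t2 : restr m.+1 t1 = restr m.+1 t2 -> restr m t1 = restr m t2.
Proof. by move/restrP => h; apply/restrP => u hu; apply: h; apply: ltnW. Qed.

Definition und N W (M : model n W) x :=
  forall m, m <= N -> ~ a_F A (run A M m x) /\ ~ a_G A (run A M m x).

Lemma und_mono N N' W (M : model n W) x : N' <= N -> und N M x -> und N' M x.
Proof. by move=> le h m hm; apply: h; apply: leq_trans le. Qed.

Definition good m s := forall N, exists W (M : model n W) x,
  PN_structure M x /\ und N M x /\ restr m (trace M x) = s.

Definition compat m s s' := forall W (M : model n W) x, PN_structure M x ->
  restr m.+1 (trace M x) = s' -> restr m (trace M x) = s.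

Lemma step m s : good m s -> exists s', good m.+1 s' /\ compat m s s'.
Proof.
move=> g; apply: NNPP => hno.
pose L := size (allwords m.+1).
pose C := map val (enum {: L.-tuple {set RIt}}).
have cl : forall l : seq (seq {set RIt}), exists N, forall c, c \in l ->
    forall W (M : model n W) x, PN_structure M x -> und N M x ->
    restr m.+1 (trace M x) = c -> restr m (trace M x) = s -> False.
  elim=> [|c l [Nl hl]]; first by exists 0.
  have [Nc hc] : exists Nc, forall W (M : model n W) x, PN_structure M x -> und Nc M x ->
      restr m.+1 (trace M x) = c -> restr m (trace M x) = s -> False.
    case: (classic (good m.+1 c)) => gc.
      have ncomp : ~ compat m s c by move=> cc; apply: hno; exists c.
      exists 0 => W M x pM _ rc rs; apply: ncomp => W' M' x' pM' rc'.
      by rewrite -rs; apply: restr_down; rewrite rc rc'.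
    have [Nc hN] := not_all_ex_not _ _ gc.
    exists Nc => W M x pM u rc rs; apply: hN; exists W, M, x; auto.
  exists (maxn Nc Nl) => c'; rewrite in_cons => /orP[/eqP-> | hc'] W M x pM u.
    by apply: hc pM _; apply: und_mono u; apply: leq_maxl.
  by apply: hl hc' _ _ _ pM (und_mono _ u); apply: leq_maxr.
have [N hN] := cl C.
have [W [M [x [pM [u rs]]]]] := g N.
apply: (hN (restr m.+1 (trace M x))) pM u erefl rs.
have hs : size (restr m.+1 (trace M x)) == L by rewrite size_map.
have -> : restr m.+1 (trace M x) = val (Tuple hs) by [].
by apply: map_f; rewrite mem_enum.
Qed.

Section Chain.
Hypothesis Hnl : forall N, exists W (M : model n W) x, PN_structure M x /\ und N M x.

Lemma good0 : good 0 [::].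
Proof. by move=> N; have [W [M [x [p u]]]] := Hnl N; exists W, M, x. Qed.

Definition stepC m s (g : good m s) : {s' | good m.+1 s' /\ compat m s s'} :=
  constructive_indefinite_description _ (step g).

Fixpoint chain m : {s | good m s} :=
  match m with
  | 0 => exist _ [::] good0
  | m'.+1 => let c := chain m' in let e := stepC (proj2_sig c) in
             exist _ (proj1_sig e) (proj1 (proj2_sig e))
  end.

Lemma chain_compat m : compat m (sval (chain m)) (sval (chain m.+1)).
Proof. by rewrite /=; case: stepC => s' [] /=. Qed.

Lemma chain_down m k W (M : model n W) x : k <= m -> PN_structure M x ->
  restr m (trace M x) = sval (chain m) -> restr k (trace M x) = sval (chain k).
Proof.
elim: m => [|m IH]; first by rewrite leqn0 => /eqP->.
rewrite leq_eqVlt => /orP[/eqP-> //|]; rewrite ltnS => hk pM hr.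
by apply: IH => //; apply: chain_compat.
Qed.

Definition tau (w : seq RIt) : {set RIt} :=
  nth set0 (sval (chain (size w).+1)) (index w (allwords (size w).+1)).

Lemma limit m N : exists W (M : model n W) x, PN_structure M x /\ und N M x /\
  forall u, size u < m -> trace M x u = tau u.
Proof.
have [W [M [x [pM [uN rs]]]]] := proj2_sig (chain m) N.
exists W, M, x; split=> //; split=> // u hu.
have := chain_down hu pM rs; rewrite /tau => <-.
rewrite /restr (nth_map [::]) ?nth_index ?index_mem ?mem_allwords //.
Qed.

Definition sw (p : RIt) : RIt := (p.2, p.1).

Fixpoint valid (u : seq RIt) : bool :=
  if u is p :: u' then [&& valid u', p \in tau u' & ohead u' != Some (sw p)] else true.

Lemma walk_det W (M : model n W) w x u y y' : PN_structure M w ->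
  WalkR M x u y -> WalkR M x u y' -> y = y'.
Proof.
move=> [_ [_ [_ [_ [h4 _]]]]] h1; elim: h1 y' => [|u1 y1 p z h IH r] y' h2.
  by inversion h2.
inversion h2 as [|u2 y2 p2 z2 hw2 r2]; subst.
have e := IH _ hw2; subst; exact: h4 _ _ _ _ r r2.
Qed.

Lemma trace_walk W (M : model n W) x u y p : PN_structure M x -> WalkR M x u y ->
  (p \in trace M x u) <-> exists z, Rm M p y z.
Proof.
move=> pM hw; rewrite inE pbE; split.
  by case=> y' [hw' hz]; rewrite (walk_det pM hw hw').
by move=> h; exists y.
Qed.

Lemma valid_walk m W (M : model n W) x : PN_structure M x ->
  (forall u, size u < m -> trace M x u = tau u) ->
  forall u, valid u -> size u < m -> exists y, WalkR M x u y.
Proof.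
move=> pM ht; elim=> [|p u IH] /=; first by exists x; constructor.
case/and3P=> vu pu _ hs.
have [y hy] := IH vu (ltnW hs).
rewrite -ht ?(ltnW hs) // in pu.
have [z hz] := proj1 (trace_walk p pM hy) pu.
by exists z; apply: WCons hy hz.
Qed.

Lemma tau_LC u (i j k : 'I_n) : valid u -> (i, j) \in tau u -> (k < i)%N ->
  exists l : 'I_n, (k, l) \in tau u.
Proof.
move=> vu hij hk.
have [W [M [x [pM [_ ht]]]]] := limit (size u).+1 0.
have [y hy] := valid_walk pM ht vu (ltnSn _).
rewrite -ht // in hij *.
have [z hz] := proj1 (trace_walk _ pM hy) hij.
have pM' := pM; case: pM' => [_ [_ [_ [_ [_ [_ [h5 _]]]]]]].
have [l [v' hv]] := h5 i j k y z hz hk.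
by exists l; apply/(trace_walk _ pM hy); exists v'.
Qed.

Lemma tau_back r u : valid (r :: u) -> sw r \in tau (r :: u).
Proof.
move=> vu.
have [W [M [x [pM [_ ht]]]]] := limit (size (r :: u)).+1 0.
have [y hy] := valid_walk pM ht vu (ltnSn _).
rewrite -ht //.
inversion hy as [|u2 y2 p2 z2 hw2 r2]; subst.
have pM' := pM; case: pM' => [_ [_ [_ [h3 _]]]].
apply/(trace_walk _ pM hy); exists y2.
by apply: (h3 r.1 r.2); rewrite -surjective_pairing.
Qed.

Lemma valid_nil : valid [::]. Proof. by []. Qed.

Definition TRm (p : RIdx n) (u v : seq RIt) : Prop :=
  [&& valid u, valid v & (v == p :: u) || (u == sw p :: v)].

Definition Tpre : model n (seq RIt) := Model (fun _ _ => False) TRm.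
Definition T : model n (seq RIt) := Model (fun i u => outdeg_is (Runion Tpre) u i) TRm.

Lemma swK p : sw (sw p) = p. Proof. by case: p. Qed.

Lemma Tports u p : valid u -> (exists v, TRm p u v) <-> p \in tau u.
Proof.
move=> vu; split.
  case=> v /and3P[_ vv /orP[/eqP e|/eqP e]].
    by subst; case/and3P: vv.
  by subst; have := tau_back vu; rewrite swK.
move=> hp; case e: (ohead u == Some (sw p)).
  case: u vu e hp => //= q u vu; move/eqP => [e]; subst q.
  exists u; apply/and3P; split=> //=; first by case/and3P: vu.
  by rewrite eqxx orbT.
exists (p :: u); apply/and3P; split=> //=; last by rewrite eqxx.
by rewrite vu hp e.
Qed.

Lemma T_PN : PN_structure T [::].
Proof.
have sym : forall p u v, TRm p u v -> TRm (sw p) v u.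
  move=> p u v /and3P[vu vv /orP[/eqP e|/eqP e]]; apply/and3P; split=> //.
    by rewrite e swK eqxx orbT.
  by rewrite e eqxx.
have nself : forall (q : RIt) (u : seq RIt), q :: u <> u.
  by move=> q u /(congr1 size) /=; lia.
split.
  by move=> u v [p h]; exists (sw p); apply: sym.
split.
  move=> u [p /and3P[_ _ /orP[/eqP e|/eqP e]]]; exact: nself (esym e).
split.
  move=> p q u v pq /and3P[vu vv /orP[/eqP e|/eqP e]] /and3P[_ _ /orP[/eqP e'|/eqP e']].
  - by apply: pq; rewrite e in e'; case: e'.
  - by subst; move/(congr1 size): e' => /=; lia.
  - by subst; move/(congr1 size): e' => /=; lia.
  - by apply: pq; rewrite e in e'; case: e' => e1 e2; rewrite [p]surjective_pairing [q]surjective_pairing e1 e2.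
split.
  by move=> i j u v h; apply: (sym (i, j)).
split.
  move=> p u v v' /and3P[vu vv /orP[/eqP e|/eqP e]] /and3P[_ vv' /orP[/eqP e'|/eqP e']].
  - by rewrite e e'.
  - by subst; move: vv; rewrite /= swK eqxx !andbF.
  - by subst; move: vv'; rewrite /= swK eqxx !andbF.
  - by rewrite e in e'; case: e'.
split.
  move=> p u u' v /and3P[vu vv /orP[/eqP e|/eqP e]] /and3P[vu' _ /orP[/eqP e'|/eqP e']].
  - by rewrite e in e'; case: e'.
  - by subst; move: vu'; rewrite /= swK eqxx !andbF.
  - by subst; move: vu; rewrite /= swK eqxx !andbF.
  - by rewrite e e'.
split.
  move=> i j k u v h hk.
  have vu : valid u by case/and3P: h.
  have hij : (i, j) \in tau u by apply/Tports => //; exists v.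
  have [l hl] := tau_LC vu hij hk.
  by have [v' hv'] := proj2 (Tports (k, l) vu) hl; exists l, v'.
split.
  move=> i j k u v h hk.
  have h' := sym _ _ _ h; have vv : valid v by case/and3P: h.
  have hji : (j, i) \in tau v by apply/Tports => //; exists u.
  have [l hl] := tau_LC vv hji hk.
  have [u' hu'] := proj2 (Tports (k, l) vv) hl.
  by exists l, u'; apply: (sym (k, l)).
by move=> u i.
Qed.

Lemma agreeT m W (M : model n W) x : PN_structure M x ->
  (forall u, size u < m -> trace M x u = tau u) ->
  forall k u y, valid u -> WalkR M x u y -> size u + k < m -> agree k T M u y.
Proof.
move=> pM ht; have pM' := pM; case: pM' => [_ [_ [_ [h3 [h4 _]]]]].
have hports : forall u y p, valid u -> WalkR M x u y -> size u < m ->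
    (exists z, Rm T p u z) <-> (exists z, Rm M p y z).
  move=> u y p vu hw hs; rewrite (Tports _ vu) -ht //; exact: trace_walk.
elim=> [|k IH] u y vu hw hs; split.
- by move=> p; apply: hports => //; rewrite addn0 in hs.
- by [].
- by move=> p; apply: hports => //; move: hs; lia.
move=> p v y2 /= hv hy2.
have vv : valid v by case/and3P: hv.
case/and3P: hv => _ _ /orP[/eqP e|/eqP e]; subst.
  apply: IH => //; first by apply: WCons hw hy2.
  by move: hs => /=; lia.
inversion hw as [|u2 y2' p2 z2 hw2 r2]; subst.
have r3 : Rm M p y y2'.
  by rewrite [p]surjective_pairing; apply: (h3 p.2 p.1).
rewrite (h4 _ _ _ _ hy2 r3).
apply: IH => //; apply: leq_ltn_trans hs; rewrite /=; lia.
Qed.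
End Chain.

Lemma local_part : converges_in A (@PN_structure n) -> local_algorithm_in A (@PN_structure n).
Proof.
move=> hc; apply: NNPP => hnl.
have Hnl : forall N, exists W (M : model n W) x, PN_structure M x /\ und N M x.
  move=> N; apply: NNPP => hno; apply: hnl; exists N => W M w pM.
  apply: NNPP => hm; exfalso; apply: hno; exists W, M, w; split=> //.
  elim/ltn_ind=> m IH hmN.
  have hprev : forall m', m' < m -> ~ a_F A (run A M m' w) /\ ~ a_G A (run A M m' w).
    by move=> m' hm'; apply: IH => //; apply: leq_trans (ltnW hm') hmN.
  split=> h; apply: hm; exists m; split=> //.
    by left; split=> // m' /hprev [].
  by right; split=> // m' /hprev [].
have [m hm] := hc _ (T Hnl) [::] (T_PN Hnl).
have [W [M [x [pM [uN ht]]]]] := limit Hnl m.+1 m.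
have ag := agreeT pM ht (valid_nil Hnl) (WNil M x) (ltnSn m).
have e := run_agree A (T_PN Hnl) pM ag.
have [nF nG] := uN m (leqnn m).
by case: hm => -[h _]; rewrite e in h.
Qed.
End K.


Theorem mainTheorem5 (n : nat) (hn : (1 <= n)%N) :
  FO_definable (@PN_structure n) /\
  (forall (Q Msg : countType) (A : automaton n Q Msg),
      converges_in A (@PN_structure n) -> local_algorithm_in A (@PN_structure n)) /\
  (forall (Q Msg : countType) (A : automaton n Q Msg),
      halts_in A (@PN_structure n) -> local_algorithm_in A (@PN_structure n)).
Proof.
split; first exact: FO_part.
split=> Q Msg A; first exact: local_part.
by case=> hc _; apply: local_part.
Qed.
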